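(* Let $k$ be a positive integer. Then: (i) for all positive divisors $l$ and $d$ of $k$, $$c(k,l,d)=c(k/d,\,k/l);$$ (ii) for every positive divisor $d$ of $k$, $$\beta_{k,d}(t)=k\,t^k\,M(1/t;\,k/d,\,k)-1;$$ (iii) for every integer $n$, $$M(t;n,k)=Z_{R(C_k)}^{\chi_n}(t,t,\dots,t).$$
   Context: Let $\epsilon_k:=e^{2\pi i/k}$ and let $(a,b)$ denote the greatest common divisor. The Ramanujan sum is $c(n,k):=\sum_{1\le m\le k,\ (m,k)=1}\epsilon_k^{mn}$ for an integer $n$ and a positive integer $k$. The $n$-necklace polynomial is $M(t;n,k):=\frac1k\sum_{d\mid k}c(n,k/d)\,t^d$. For divisors $l,d$ of $k$, set $c(k,l,d):=\sum_{1\le m\le k,\ (m,k)=l}\epsilon_d^{m}$. The Harer–Zagier polynomial is $\beta_{k,d}(t):=\sum_{r=1}^{k-1}\epsilon_d^{r}\,t^{k-(k,r)}$ for $d\mid k$ (equivalently $\sum_{l\mid k,\ l<k}c(k,l,d)t^{k-l}$). For a permutation group $H$ on a set of $v$ elements and a character $\chi$ of $H$, the generalized Redfield–Pólya cycle index is $Z_H^\chi(t_1,\dots,t_v):=\frac{1}{|H|}\sum_{h\in H}\chi(h)\prod_{j=1}^v t_j^{c_j(h)}$, where $c_j(h)$ is the number of cycles of length $j$ of $h$. For a finite group $G$, $R(G)$ denotes its image under the (left) regular representation, a permutation group on the set $G$. $C_k$ is the cyclic group of order $k$, and $\chi_n$ is the irreducible character of $C_k$ whose value on a fixed generator is $\epsilon_k^n$.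 *)

(* Defs.v *)
From mathcomp Require Import all_boot all_algebra all_fingroup.
From mathcomp Require Import reals trigo complex.
Set Implicit Arguments. Unset Strict Implicit. Unset Printing Implicit Defensive.
Import GRing.Theory Num.Theory.
Local Open Scope ring_scope.
Local Open Scope complex_scope.

Section Defs.
Variable R : realType.
Local Notation C := R[i].

Definition eps (k : nat) : C := cos (2 * pi / k%:R) +i* sin (2 * pi / k%:R).

Definition ramanujan (n : int) (k : nat) : C :=
  \sum_(1 <= m < k.+1 | coprime m k) eps k ^ (m%:Z * n).

Definition necklace (t : C) (n : int) (k : nat) : C :=
  k%:R^-1 * \sum_(d <- divisors k) ramanujan n (k %/ d) * t ^+ d.

Definition cgen (k l d : nat) : C :=
  \sum_(1 <= m < k.+1 | gcdn m k == l) eps d ^+ m.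

Definition beta (k d : nat) (t : C) : C :=
  \sum_(1 <= r < k) eps d ^+ r * t ^+ (k - gcdn k r).

Definition ncycles (T : finType) (s : {perm T}) (j : nat) : nat :=
  #|[set X in porbits s | #|X| == j]|.

(* generalized Redfield-Polya cycle index Z_H^chi(t_1,...,t_v), v = #|T|,
   the variables being given as a function tv : nat -> C (tv j = t_j) *)
Definition cycle_index (T : finType) (H : {set {perm T}}) (chi : {perm T} -> C)
    (tv : nat -> C) : C :=
  #|H|%:R^-1 * \sum_(h in H) chi h * \prod_(1 <= j < #|T|.+1) tv j ^+ ncycles h j.

End Defs.

Definition lreg (gT : finGroupType) (x : gT) : {perm gT} := perm (mulgI x).

(* R(G) for G the whole group gT: the image of the left regular representation *)
Definition regular_perm_group (gT : finGroupType) : {set {perm gT}} :=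
  [set lreg x | x : gT].

Definition glog (gT : finGroupType) (g h : gT) : nat :=
  find (fun j => (g ^+ j)%g == h) (iota 0 #[g]%g).

(* chi_n on C_k = <[g]> (g the fixed generator, #[g] = k): chi_n(g^j) = eps_k^{n j} *)
Definition chi_cyc (R : realType) (gT : finGroupType) (g : gT) (n : int) (h : gT)
    : R[i] := eps R #[g]%g ^ (n * (glog g h)%:Z).

(* Main.v *)
Require Import Defs.
From mathcomp Require Import all_boot all_algebra all_fingroup.
From mathcomp Require Import reals trigo complex.
From mathcomp Require Import cyclic.
From mathcomp.algebra_tactics Require Import ring.
From mathcomp Require Import zify.
Import GRing.Theory Num.Theory.
Local Open Scope ring_scope.
Local Open Scope complex_scope.


Lemma glogX (gT : finGroupType) (g : gT) i : (i < #[g]%g)%N -> glog g (g ^+ i)%g = i.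
Proof.
move=> hi; rewrite /glog (eq_in_find (a2 := pred1 i)).
  by have := nth_iota 0 0 hi; rewrite add0n => h; rewrite -/(index i _) -{1}h index_uniq ?size_iota ?iota_uniq.
move=> j; rewrite mem_iota add0n => /andP [_ hj] /=.
by rewrite eq_expg_mod_order !modn_small.
Qed.
Lemma cycle_enum (gT : finGroupType) (g : gT) :
  <[g]>%g = [set (g ^+ (val i))%g | i : 'I_#[g]%g].
Proof.
apply/setP => x; apply/idP/imsetP.
- by case/cyclePmin => i hi ->; exists (Ordinal hi).
- by case=> i _ ->; apply: mem_cycle.
Qed.
Lemma expg_inj_ord (gT : finGroupType) (g : gT) :
  {in [pred i : 'I_#[g]%g | true] &, injective (fun i : 'I_#[g]%g => (g ^+ (val i))%g)}.
Proof.
move=> i j _ _ /eqP; rewrite eq_expg_mod_order !modn_small ?ltn_ord // => /eqP h.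
exact: val_inj.
Qed.
Section G.
Variable gT : finGroupType.
Implicit Types x y : gT.
Lemma lreg1 x : lreg x 1%g = x.
Proof. by rewrite /lreg permE /= mulg1. Qed.
Lemma lregX x i y : (lreg x ^+ i)%g y = (x ^+ i * y)%g.
Proof.
move: y; elim: i => [|i IH] y; first by rewrite !expg0 perm1 mul1g.
by rewrite expgS permM IH /lreg permE expgSr mulgA.
Qed.
Lemma porbit_lreg x y : porbit (lreg x) y = (<[x]> :* y)%g.
Proof.
apply/setP => z; rewrite mem_rcoset [@porbit]unlock; apply/imsetP/idP.
- case=> p /cycleP [i ->] ->; rewrite /aperm lregX mulgK; exact: mem_cycle.
- move=> /cycleP [i hi]; exists (lreg x ^+ i)%g; first exact: mem_cycle.
  by rewrite /aperm lregX -hi mulgKV.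
Qed.
Lemma porbits_lreg x : porbits (lreg x) = rcosets <[x]> [set: gT].
Proof.
apply/setP => X; apply/imsetP/imsetP.
- by case=> y _ ->; exists y; rewrite ?inE // porbit_lreg rcosetE.
- by case=> y _ ->; exists y; rewrite ?inE // porbit_lreg rcosetE.
Qed.
Lemma card_porbits_lreg x : (#|porbits (lreg x)| * #[x]%g)%N = #|gT|.
Proof.
rewrite porbits_lreg mulnC -cardsT.
exact: (Lagrange (subsetT <[x]>%G)).
Qed.
Lemma ncycles_lreg x j : ncycles (lreg x) j = if j == #[x]%g then #|porbits (lreg x)| else 0%N.
Proof.
rewrite /ncycles; case: eqP => [->|ne].
  apply: eq_card => X; rewrite inE andb_idr //.
  by rewrite porbits_lreg => /imsetP [y _ ->]; rewrite rcosetE card_rcoset.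
apply/eqP; rewrite cards_eq0; apply/eqP/setP => X; rewrite !inE.
apply/negbTE; apply/negP => /andP [].
rewrite porbits_lreg => /imsetP [y _ ->]; rewrite rcosetE card_rcoset => /eqP h.
by apply: ne.
Qed.
End G.
Section S.
Variable R : realType.
Definition E (x : R) : R[i] := cos (2 * pi * x) +i* sin (2 * pi * x).
Lemma ED x y : E (x + y) = E x * E y.
Proof. rewrite /E mulrDr cosD sinD /=. congr (_ +i* _); ring. Qed.
Lemma E0 : E 0 = 1.
Proof. by rewrite /E mulr0 cos0 sin0. Qed.
Lemma EN x : E (- x) = (E x)^-1.
Proof. apply/esym/mulr1_eq; by rewrite -ED addrN E0. Qed.
Lemma En (n : nat) : E n%:R = 1.
Proof.
elim: n => [|n IH]; first by rewrite E0.
rewrite -addn1 natrD ED IH mul1r /E mulr1 mulr_natl cos2pi sin2pi //.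
Qed.
Lemma Ez (z : int) : E z%:~R = 1.
Proof.
case: z => n; first by rewrite -pmulrn En.
by rewrite NegzE mulrNz EN -pmulrn En invr1.
Qed.
Lemma EzD x (z : int) : E (x + z%:~R) = E x.
Proof. by rewrite ED Ez mulr1. Qed.
Lemma epsE (a : nat) : eps R a = E a%:R^-1.
Proof. by []. Qed.
Lemma epsn (a m : nat) : eps R a ^+ m = E (m%:R / a%:R).
Proof.
elim: m => [|m IH]; first by rewrite mul0r E0.
by rewrite exprS IH epsE -ED -addn1 natrD mulrDl mul1r addrC.
Qed.
Lemma epsz (a : nat) (z : int) : eps R a ^ z = E (z%:~R / a%:R).
Proof.
case: z => n; first by rewrite -pmulrn -epsn.
by rewrite NegzE mulrNz -pmulrn mulNr EN -epsn.  
Qed.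
Lemma gcd_reindex (K e : nat) (F : nat -> R[i]) : (0 < e)%N ->
  \sum_(1 <= m < (e * K).+1 | gcdn m (e * K) == e) F m =
  \sum_(1 <= m < K.+1 | coprime m K) F (e * m)%N.
Proof.
move=> e0.
rewrite -big_filter -[RHS]big_filter -(big_map (muln e) xpredT F).
apply: perm_big; apply: uniq_perm.
- by apply: filter_uniq; apply: iota_uniq.
- rewrite map_inj_uniq; first by apply: filter_uniq; apply: iota_uniq.
  by move=> a b /eqP; rewrite eqn_pmul2l // => /eqP.
move=> x; rewrite mem_filter mem_index_iota; apply/andP/mapP.
- case=> /eqP hg hb.
  have ex : (e %| x)%N by rewrite -hg dvdn_gcdl.
  have hx : x = (e * (x %/ e))%N by rewrite mulnC divnK.
  move: (x %/ e)%N hx => m hx; subst x.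
  exists m => //.
  rewrite mem_filter mem_index_iota.
  move: hg; rewrite -muln_gcdr => hg; apply/andP; split.
    by rewrite /coprime -(eqn_pmul2l e0) hg muln1.
  move: hb; clear; nia.
- case=> m; rewrite mem_filter mem_index_iota => /andP [hc hb] ->.
  rewrite -muln_gcdr (eqP hc) muln1 eqxx /=.
  move: hb e0; clear; nia.
Qed.

Lemma gcd_group (k : nat) (G : nat -> nat -> R[i]) : (0 < k)%N ->
  \sum_(1 <= m < k.+1) G m (gcdn m k) =
  \sum_(e <- divisors k) \sum_(1 <= m < k.+1 | gcdn m k == e) G m e.
Proof.
move=> k0.
under [RHS]eq_bigr do rewrite big_mkcond.
rewrite exchange_big /=; apply: eq_bigr => m _.
rewrite -big_mkcond -big_filter.
rewrite (eq_filter (a2 := pred1 (gcdn m k))); last by move=> e; rewrite /= eq_sym.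
rewrite filter_pred1_uniq ?divisors_uniq ?big_seq1 //.
by rewrite -dvdn_divisors // dvdn_gcdr.
Qed.

Lemma prod_pred1 (t : R[i]) (K o N : nat) : (1 <= o <= K)%N ->
  \prod_(1 <= j < K.+1) t ^+ (if j == o then N else 0%N) = t ^+ N.
Proof.
move=> ho; rewrite prodrXr; congr (_ ^+ _).
rewrite -big_mkcond -big_filter /=.
rewrite (eq_filter (a2 := pred1 o)) // filter_pred1_uniq ?iota_uniq ?big_seq1 //.
by rewrite mem_index_iota ltnS.
Qed.

Lemma part1 (k l d : nat) : (0 < k)%N -> (l %| k)%N -> (d %| k)%N ->
  cgen R k l d = ramanujan R (k %/ d)%N%:Z (k %/ l)%N.
Proof.
move=> k0 hl hd.
have l0 : (0 < l)%N by apply: dvdn_gt0 hl.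
have d0 : (0 < d)%N by apply: dvdn_gt0 hd.
case/dvdnP: hl => K hK.
have K0 : (0 < K)%N by move: k0; rewrite hK muln_gt0 => /andP [].
have -> : cgen R k l d = cgen R (l * K) l d by rewrite hK mulnC.
have -> : (k %/ l)%N = K by rewrite hK mulnK.
rewrite /cgen /ramanujan gcd_reindex //; apply: eq_bigr => m _.
rewrite epsn epsz; congr E.
rewrite -PoszM -pmulrn !natrM natf_div // hK natrM.
have : (d%:R : R) != 0 by rewrite pnatr_eq0 -lt0n.
have : (K%:R : R) != 0 by rewrite pnatr_eq0 -lt0n.
have : (l%:R : R) != 0 by rewrite pnatr_eq0 -lt0n.
by move=> *; field; apply/andP.
Qed.

Lemma part2 (k d : nat) (t : R[i]) : (0 < k)%N -> (d %| k)%N -> t != 0 ->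
  beta k d t = k%:R * t ^+ k * necklace t^-1 (k %/ d)%N%:Z k - 1.
Proof.
move=> k0 hd t0.
have d0 : (0 < d)%N by apply: dvdn_gt0 hd.
have kR : (k%:R : R[i]) != 0 by rewrite pnatr_eq0 -lt0n.
apply: (addIr 1); rewrite subrK.
transitivity (\sum_(1 <= m < k.+1) eps R d ^+ m * t ^+ (k - gcdn m k)).
  rewrite big_nat_recr //= gcdnn subnn expr0 mulr1.
  have -> : eps R d ^+ k = 1 by rewrite epsn -natf_div // En.
  by congr (_ + 1); apply: eq_bigr => m _; rewrite gcdnC.
rewrite (gcd_group k (fun m e => eps R d ^+ m * t ^+ (k - e))) //.
have -> : forall S, k%:R * t ^+ k * (k%:R^-1 * S) = t ^+ k * S.
  by move=> S; field.
rewrite /necklace big_distrr /=; apply: eq_big_seq => e he.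
have hek : (e %| k)%N by rewrite dvdn_divisors.
have hle : (e <= k)%N by apply: dvdn_leq.
rewrite -(part1 k e d k0 hek hd) mulrCA.
have -> : t ^+ k * t^-1 ^+ e = t ^+ (k - e).
  by rewrite -{1}(subnK hle) exprD exprVn mulfK // expf_neq0.
by rewrite /cgen big_distrl.
Qed.

Lemma neck_sum (K : nat) (n : int) (t : R[i]) : (0 < K)%N ->
  \sum_(e <- divisors K) ramanujan R n (K %/ e) * t ^+ e =
  \sum_(1 <= m < K.+1) eps R K ^ (n * m%:Z) * t ^+ (gcdn m K).
Proof.
move=> K0.
rewrite (gcd_group K (fun m e => eps R K ^ (n * m%:Z) * t ^+ e)) //.
apply: eq_big_seq => e he.
have hek : (e %| K)%N by rewrite dvdn_divisors.
have e0 : (0 < e)%N by apply: dvdn_gt0 hek.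
rewrite -big_distrl /ramanujan; apply: (congr1 (fun x => x * t ^+ e)).
case/dvdnP: hek => q hq.
have q0 : (0 < q)%N by move: K0; rewrite hq muln_gt0 => /andP [].
rewrite hq (mulnK _ e0) (mulnC q e) (gcd_reindex _ _ _ e0); apply: eq_bigr => m _.
rewrite !epsz; apply: congr1.
rewrite !intrM -!pmulrn !natrM.
have : (e%:R : R) != 0 by rewrite pnatr_eq0 -lt0n.
have : (q%:R : R) != 0 by rewrite pnatr_eq0 -lt0n.
by move=> *; field; apply/andP.
Qed.

Lemma divn_divn_gcd (K i : nat) : (0 < K)%N -> (K %/ (K %/ gcdn K i))%N = gcdn K i.
Proof.
move=> K0.
have hg : (gcdn K i %| K)%N by apply: dvdn_gcdl.
case/dvdnP: hg => q hq.
have g0 : (0 < gcdn K i)%N by rewrite gcdn_gt0 K0.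
have q0 : (0 < q)%N by move: K0; rewrite hq muln_gt0 => /andP [].
by rewrite {1 2}hq mulnK // mulKn.
Qed.

Lemma part3 (k : nat) (gT : finGroupType) (g : gT) : (0 < k)%N ->
  <[g]>%g = [set: gT] -> #[g]%g = k ->
   forall (n : int) (t : R[i]),
     necklace t n k =
     cycle_index (regular_perm_group gT)
       (fun p : {perm gT} => chi_cyc R g n (p 1%g)) (fun _ => t).
Proof.
move=> k0 hg hk n t; subst k.
have cardT : #|gT| = #[g]%g by rewrite -cardsT -hg.
have linj : injective (@lreg gT) by move=> x y h; rewrite -(lreg1 _ x) h lreg1.
rewrite /cycle_index /regular_perm_group card_imset // cardT.
rewrite big_imset /=; last by move=> x y _ _; apply: linj.
rewrite (eq_bigr (fun x => chi_cyc R g n x * t ^+ (#[g]%g %/ #[x]%g)%N)); last first.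
  move=> x _; rewrite lreg1; apply: congr1.
  under eq_bigr => j _ do rewrite ncycles_lreg.
  rewrite prod_pred1; last first.
    rewrite order_gt0 /= -cardT -cardsT; exact: subset_leq_card (subsetT _).
    by rewrite -cardT -(card_porbits_lreg _ x) mulnK // order_gt0.
rewrite (eq_bigl (fun x => x \in <[g]>%g)); last by move=> x; rewrite hg !inE.
rewrite cycle_enum big_imset /=; last first.
  move=> i j _ _ /eqP; rewrite eq_expg_mod_order !modn_small ?ltn_ord // => /eqP h; exact: val_inj.
rewrite (eq_bigr (fun i : 'I_#[g]%g => eps R #[g]%g ^ (n * (i : nat)%:Z) * t ^+ (gcdn #[g]%g i))); last first.
  move=> i _; rewrite /chi_cyc (@glogX _ g i (ltn_ord i)) orderXgcd divn_divn_gcd //.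
rewrite /necklace (neck_sum _ _ t k0); apply: congr1.
rewrite -(big_mkord xpredT (fun i => eps R #[g]%g ^ (n * i%:Z) * t ^+ (gcdn #[g]%g i))).
rewrite (big_ltn k0) (big_nat_recr _ _ _ k0) addrC gcdnn gcdn0.
apply: congr2; first by apply: eq_bigr => i _; rewrite gcdnC.
apply: (congr1 (fun x => x * t ^+ #[g]%g)); rewrite mulr0 expr0z epsz intrM -pmulrn mulfK ?Ez //.
by rewrite pnatr_eq0 -lt0n.
Qed.
End S.

Theorem proposition1 (R : realType) (k : nat) (hk : (0 < k)%N) :
  (* (i) *)
  (forall l d : nat, (l %| k)%N -> (d %| k)%N ->
     cgen R k l d = ramanujan R (k %/ d)%N%:Z (k %/ l)%N) /\
  (* (ii) *)
  (forall d : nat, (d %| k)%N -> forall t : R[i], t != 0 ->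
     beta k d t = k%:R * t ^+ k * necklace t^-1 (k %/ d)%N%:Z k - 1) /\
  (* (iii) C_k realized as any finite group gT generated by an element g of order k *)
  (forall (gT : finGroupType) (g : gT), <[g]>%g = [set: gT] -> #[g]%g = k ->
   forall (n : int) (t : R[i]),
     necklace t n k =
     cycle_index (regular_perm_group gT)
       (fun p : {perm gT} => chi_cyc R g n (p 1%g)) (fun _ => t)).
Proof.
split; first by move=> l d hl hd; apply: part1.
split; first by move=> d hd t t0; apply: part2.
by move=> gT g hg ho; apply: part3.
Qed.
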